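(* Let $F$ be a positive integer, $p\ge 1$, and $n_1<n_2<\cdots<n_p<F$ positive integers with $\gcd\{n_1,\dots,n_p\}\nmid F$. Then $\{n_1,\dots,n_p\}$ is the minimal $\mathrm{Sat}(F)$-system of generators of $\mathrm{Sat}(F)[\{n_1,\dots,n_p\}]$ if and only if $\gcd\{n_1,\dots,n_i\}\neq\gcd\{n_1,\dots,n_{i+1}\}$ for all $i\in\{1,\dots,p-1\}$.
   Context: A numerical semigroup is a subset $S\subseteq\mathbb{N}$ closed under addition, containing $0$, with $\mathbb{N}\setminus S$ finite; its Frobenius number $\mathrm{F}(S)$ is the largest integer not in $S$. For $A\subseteq\mathbb{N}$ and $a\in A$, let $\mathrm{d}_A(a)=\gcd\{x\in A\mid x\le a\}$. A numerical semigroup $S$ is saturated if $s+\mathrm{d}_S(s)\in S$ for all $s\in S\setminus\{0\}$. For a positive integer $F$, $\mathrm{Sat}(F)$ denotes the set of all saturated numerical semigroups $S$ with $\mathrm{F}(S)=F$. Let $\Delta(F+1)=\{0\}\cup\{x\in\mathbb{N}\mid x\ge F+1\}$. A set $X\subseteq\mathbb{N}$ is a $\mathrm{Sat}(F)$-set if $X\cap\Delta(F+1)=\emptyset$ and there exists $S\in\mathrm{Sat}(F)$ with $X\subseteq S$. For a $\mathrm{Sat}(F)$-set $X$, $\mathrm{Sat}(F)[X]$ denotes the intersection of all elements of $\mathrm{Sat}(F)$ containing $X$ (the smallest element of $\mathrm{Sat}(F)$ containing $X$). If $S=\mathrm{Sat}(F)[X]$, $X$ is a $\mathrm{Sat}(F)$-system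 of generators of $S$; it is minimal if $S\neq\mathrm{Sat}(F)[Y]$ for every proper subset $Y\subsetneq X$. Every $S\in\mathrm{Sat}(F)$ has a unique minimal $\mathrm{Sat}(F)$-system of generators. *)

(* Defs.v *)
From mathcomp Require Import all_boot.
Set Implicit Arguments. Unset Strict Implicit. Unset Printing Implicit Defensive.

Definition is_numerical_semigroup (S : pred nat) : Prop :=
  S 0 /\ (forall x y, S x -> S y -> S (x + y)) /\
  exists N, forall x, N <= x -> S x.

Definition frobenius_is (S : pred nat) (F : nat) : Prop :=
  ~~ S F /\ forall x, F < x -> S x.

Definition dA (A : pred nat) (a : nat) : nat :=
  \big[gcdn/0]_(0 <= x < a.+1 | A x) x.

Definition saturated (S : pred nat) : Prop :=
  forall s, S s -> s != 0 -> S (s + dA S s).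

Definition inSat (F : nat) (S : pred nat) : Prop :=
  is_numerical_semigroup S /\ saturated S /\ frobenius_is S F.

Definition subsetP (X Y : nat -> Prop) : Prop := forall x, X x -> Y x.

Definition SatSet (F : nat) (X : nat -> Prop) : Prop :=
  (forall x, X x -> x <> 0 /\ x <= F) /\
  exists S, inSat F S /\ subsetP X S.

Definition SatHull (F : nat) (X : nat -> Prop) : nat -> Prop :=
  fun x => forall S : pred nat, inSat F S -> subsetP X S -> S x.

Definition minimal_Sat_system (F : nat) (X : nat -> Prop) : Prop :=
  SatSet F X /\
  forall Y : nat -> Prop, subsetP Y X -> ~ subsetP X Y ->
    ~ (forall x, SatHull F Y x <-> SatHull F X x).

Definition gcd_seq (s : seq nat) : nat := foldr gcdn 0 s.

(* Main.v *)
Require Import Defs.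
From mathcomp Require Import all_boot.
From Stdlib Require Import Classical ClassicalEpsilon.
From mathcomp Require Import zify.
Set Implicit Arguments. Unset Strict Implicit.

Lemma dA_dvd (A : pred nat) x a : A a -> a <= x -> dA A x %| a.
Proof.
rewrite /dA big_mkcond /=.
elim: x => [|x IH] Aa ax.
  by rewrite leqn0 in ax; move/eqP: ax => ->; rewrite dvdn0.
rewrite big_nat_recr //=.
case: (ltngtP a x.+1) => h.
- by apply: dvdn_trans (dvdn_gcdl _ _) (IH Aa _).
- by rewrite ltnNge ax in h.
- by rewrite -h Aa dvdn_gcdr.
Qed.

Lemma dvd_dA (A : pred nat) x d : (forall a, A a -> a <= x -> d %| a) -> d %| dA A x.
Proof.
move=> H; rewrite /dA big_nat_cond.
apply: (big_ind (fun g => d %| g)) => //.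
  by move=> g1 g2 h1 h2; rewrite dvdn_gcd h1 h2.
by move=> i /andP[/andP[_ hi] Ai]; apply: H.
Qed.

Lemma dA_mono (A : pred nat) x z : x <= z -> dA A z %| dA A x.
Proof.
by move=> xz; apply: dvd_dA => a Aa ax; apply: dA_dvd Aa (leq_trans ax xz).
Qed.

Definition SA (F : nat) (A : pred nat) : pred nat := fun x => (F < x) || (dA A x %| x).

Lemma SA_inSat F (A : pred nat) : ~~ (dA A F %| F) -> inSat F (SA F A).
Proof.
move=> HF; split; [|split].
- split; first by rewrite /SA dvdn0 orbT.
  split; last by exists F.+1 => x hx; rewrite /SA hx.
  move=> x y; rewrite /SA.
  case: (ltnP F (x + y)) => //= hxy.
  have hx : x <= F by apply: leq_trans hxy; apply: leq_addr.
  have hy : y <= F by apply: leq_trans hxy; apply: leq_addl.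
  rewrite ltnNge hx ltnNge hy /= => dx dy.
  apply: dvdn_add.
    by apply: dvdn_trans dx; apply: dA_mono; apply: leq_addr.
  by apply: dvdn_trans dy; apply: dA_mono; apply: leq_addl.
- move=> s; rewrite /SA.
  case: (ltnP F (s + dA (SA F A) s)) => //= h.
  have hs : s <= F by apply: leq_trans h; apply: leq_addr.
  rewrite ltnNge hs /= => ds _.
  have key : dA A s %| dA (SA F A) s.
    apply: dvd_dA => a; rewrite /SA => /orP[Fa|da] as_.
      by have := leq_trans Fa (leq_trans as_ hs); rewrite ltnn.
    by apply: dvdn_trans da; apply: dA_mono.
  set D := dA _ s. apply: (@dvdn_trans (dA A s)); first by apply: dA_mono; apply: leq_addr.
  by apply: dvdn_add.
- split; first by rewrite /SA ltnn.
  by move=> x hx; rewrite /SA hx.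
Qed.

Lemma SA_sub F (A : pred nat) a : A a -> SA F A a.
Proof. by move=> Aa; rewrite /SA (@dA_dvd A a a Aa (leqnn a)) orbT. Qed.

Lemma gcd_seq_dvd s x : x \in s -> gcd_seq s %| x.
Proof.
elim: s => //= y s IH; rewrite in_cons => /orP[/eqP->|h].
  exact: dvdn_gcdl.
by apply: dvdn_trans (dvdn_gcdr _ _) (IH h).
Qed.

Lemma dvd_gcd_seq s d : (forall x, x \in s -> d %| x) -> d %| gcd_seq s.
Proof.
elim: s => [|y s IH] H /=; first exact: dvdn0.
rewrite dvdn_gcd H ?mem_head //=; apply: IH => x hx; apply: H.
by rewrite in_cons hx orbT.
Qed.

Lemma sat_up F (S : pred nat) : inSat F S ->
  forall m u x, x - u <= m -> S u -> u != 0 -> u <= x -> dA S u %| x -> S x.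
Proof.
move=> [_ [Hsat _]]; elim=> [|m IH] u x hm Su u0 ux hd.
  have -> : x = u by apply/eqP; rewrite eqn_leq ux andbT -subn_eq0 -leqn0.
  by [].
have du : dA S u %| u by apply: dA_dvd.
have dpos : 0 < dA S u.
  rewrite lt0n; apply/negP => /eqP e; rewrite e dvd0n in du; by rewrite du in u0.
case: (ltngtP u x) => hux; last by rewrite -hux.
  2: by rewrite ltnNge ux in hux.
have hdd : dA S u %| x - u by apply: dvdn_sub.
have hle : dA S u <= x - u by apply: dvdn_leq => //; rewrite subn_gt0.
apply: (IH (u + dA S u)).
- by move: hm hle dpos; clear; lia.
- exact: Hsat.
- by rewrite addn_eq0 negb_and u0.
- by move: hle hux; clear; lia.
- apply: dvdn_trans hd; apply: dA_mono; apply: leq_addr.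
Qed.

Lemma sorted_lt_take n j a : sorted ltn n -> j < size n -> a \in n ->
  a < nth 0 n j -> a \in take j n.
Proof.
move=> Hs jn an alt.
have ka : index a n < size n by rewrite index_mem.
have ea : nth 0 n (index a n) = a by apply: nth_index.
case: (ltnP (index a n) j) => h.
  rewrite -ea -(nth_take 0 h) mem_nth // size_take jn //.
case: (ltngtP j (index a n)) h => // h _.
  have := sorted_ltn_nth ltn_trans 0 Hs; move=> /(_ j (index a n) jn ka h).
  by rewrite ea => /(ltn_trans alt); rewrite ltnn.
by move: alt; rewrite h ea ltnn.
Qed.

Lemma take_le n i x : sorted ltn n -> 0 < i -> i <= size n -> x \in take i n ->
  x <= nth 0 n i.-1.
Proof.
move=> Hs i0 isz xt.
have szt : size (take i n) = i by rewrite size_takel.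
have kt : index x (take i n) < i by have := index_mem x (take i n); rewrite szt xt.
have ex : nth 0 n (index x (take i n)) = x by rewrite -(nth_take 0 kt) nth_index.
case: (ltngtP (index x (take i n)) i.-1) => h.
- apply: ltnW; rewrite -{1}ex; apply: (sorted_ltn_nth ltn_trans 0 Hs) => //.
    by rewrite inE; apply: leq_trans kt isz.
  by rewrite inE; move: i0 isz; clear; lia.
- by move: kt h; clear; lia.
- by rewrite -h ex.
Qed.

Theorem proposition44 (F : nat) (n : seq nat) :
  0 < F -> 1 <= size n -> sorted ltn n ->
  (forall x, x \in n -> 0 < x /\ x < F) ->
  ~~ (gcd_seq n %| F) ->
  (minimal_Sat_system F (fun x => x \in n) <->
   (forall i, 1 <= i <= size n - 1 -> gcd_seq (take i n) <> gcd_seq (take i.+1 n))).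
Proof.
move=> F0 sz Hs Hn Hg; split.
- move=> [_ Hmin] i /andP[i1 i2] Heq.
  have ilt : i < size n by move: i1 i2 sz; clear; lia.
  have ilt' : i.-1 < size n by move: ilt; clear; lia.
  set a := nth 0 n i.-1; set b := nth 0 n i.
  have ab : a < b.
    apply: (sorted_ltn_nth ltn_trans 0 Hs) => //; move: i1; clear; lia.
  have bn : b \in n by apply: mem_nth.
  have an : a \in n by apply: mem_nth.
  have key : forall S, inSat F S -> (forall y, y \in n -> y != b -> S y) -> S b.
    move=> S HS HY.
    apply: (@sat_up F S HS (b - a) a b (leqnn _)).
    + by apply: HY => //; rewrite neq_ltn ab.
    + by have [h _] := Hn a an; rewrite -lt0n.
    + exact: ltnW.
    + apply: (@dvdn_trans (gcd_seq (take i n))).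
        apply: dvd_gcd_seq => x hx.
        have xa : x <= a by apply: take_le => //; apply: ltnW.
        apply: dA_dvd => //; apply: HY.
          exact: mem_take hx.
        by rewrite neq_ltn (leq_ltn_trans xa ab).
      by rewrite Heq; apply: gcd_seq_dvd; rewrite (take_nth 0 ilt) mem_rcons mem_head.
  apply: (Hmin (fun x => x \in n /\ x != b)).
  + by move=> x [].
  + by move=> H; have [_] := H b bn; rewrite eqxx.
  + move=> x; split.
      by move=> hY S HS HX; apply: hY => // y [hy _]; apply: HX.
    move=> hX S HS HY; apply: hX => // y hy.
    case: (eqVneq y b) => [->|ne]; last by apply: HY.
    by apply: key => // z zn zb; apply: HY.
- move=> Hstr; split.
  + split.
      move=> x /Hn [h1 h2]; split; [move: h1; clear; lia | exact: ltnW].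
    exists (SA F (fun x => x \in n)); split.
      apply: SA_inSat; apply/negP => h; move/negP: Hg; apply.
      apply: dvdn_trans h; apply: dvd_dA => a ha _; exact: gcd_seq_dvd.
    by move=> x hx; apply: SA_sub.
  + move=> Y HYX HnXY Heqv.
    have [b [bn nYb]] : exists b, b \in n /\ ~ Y b.
      apply: NNPP => H; apply: HnXY => x hx; apply: NNPP => nY; apply: H.
      by exists x.
    pose A : pred nat := fun x => (x \in n) &&
      (if excluded_middle_informative (Y x) then true else false).
    have HS : inSat F (SA F A).
      apply: SA_inSat; apply/negP => h; move/negP: Hg; apply.
      apply: dvdn_trans h; apply: dvd_dA => a /andP[ha _] _; exact: gcd_seq_dvd.
    have SYsub : Defs.subsetP Y (SA F A).
      move=> x hx; apply: SA_sub; rewrite /A HYX //.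
      by case: excluded_middle_informative.
    have Sb : SA F A b.
      by apply: (proj2 (Heqv b)) => // S _ HX; apply: HX.
    have [b0 bF] := Hn b bn.
    move: Sb; rewrite /SA ltnNge (ltnW bF) /= => hd.
    set j := index b n.
    have jn : j < size n by rewrite index_mem.
    have eb : nth 0 n j = b by apply: nth_index.
    have hg : gcd_seq (take j n) %| b.
      apply: dvdn_trans hd; apply: dvd_dA => a /andP[an aY] ab.
      apply: gcd_seq_dvd; apply: sorted_lt_take => //.
      rewrite eb ltn_neqAle ab andbT; apply/eqP => e; move: aY; rewrite e.
      by case: excluded_middle_informative.
    case: (posnP j) => j0.
      by move: hg; rewrite j0 take0 /= dvd0n => /eqP b00; rewrite b00 in b0.
    apply: (Hstr j); first by rewrite j0 /=; move: jn; clear; lia.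
    apply/eqP; rewrite eqn_dvd; apply/andP; split.
      apply: dvd_gcd_seq => x; rewrite (take_nth 0 jn) mem_rcons in_cons eb.
      by move=> /orP[/eqP->|hx] //; apply: gcd_seq_dvd.
    apply: dvd_gcd_seq => x hx; apply: gcd_seq_dvd.
    by rewrite (take_nth 0 jn) mem_rcons in_cons hx orbT.
Qed.
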